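(* Let $n,G$ be positive integers with $2^n$ dividing $G$, let $H=G/2^n$, and let $X=\{A\subseteq G: |A|=H\}$. For $\mathcal A\subseteq X$ define \[\|\mathcal A\|_2=\min\{|x| : x\subseteq G \text{ and } x\not\subseteq a \text{ for all } a\in\mathcal A\}.\] Let $k$ be a natural number and let $\mathcal A\subseteq X$ be non-empty with $\|\mathcal A\|_2\geq k+1$. Then \[\frac{|\mathcal A|}{|X|}\geq \frac{(G-H)!\,(H-k)!}{(G-k)!}.\]
   Context: Natural numbers are identified with the set of their predecessors, so $G=\{0,1,\ldots,G-1\}$ and $X$ is the family of all $H$-element subsets of $G$. *)

(* Defs.v *)
From mathcomp Require Import all_boot all_order all_algebra.
Set Implicit Arguments. Unset Strict Implicit. Unset Printing Implicit Defensive.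

Definition Xfam (G H : nat) : {set {set 'I_G}} := [set a : {set 'I_G} | #|a| == H].

(* The default G.+1 (for an empty index range) is never used in the theorem,
   since the whole ground set G is a witness when H < G. *)
Definition norm2 (G : nat) (A : {set {set 'I_G}}) : nat :=
  \big[minn/G.+1]_(x : {set 'I_G} | [forall a in A, ~~ (x \subset a)]) #|x|.

(* Main.v *)
Require Import Defs.
From mathcomp Require Import all_boot all_order all_algebra.
From mathcomp Require Import ring.
Import Order.TTheory GRing.Theory Num.Theory.

Lemma norm2_le G (A : {set {set 'I_G}}) (x : {set 'I_G}) :
  [forall a in A, ~~ (x \subset a)] -> norm2 A <= #|x|.
Proof.
move=> Hx; rewrite /norm2.
have : x \in index_enum {set 'I_G} by rewrite mem_index_enum.
elim: (index_enum _) => [|y r IH] //; rewrite inE big_cons.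
case/orP => [/eqP <-|xr]; first by rewrite Hx geq_minl.
case: ifP => _; last exact: IH.
exact: leq_trans (geq_minr _ _) (IH xr).
Qed.

Lemma exists_card G m : m <= G -> exists x : {set 'I_G}, #|x| = m.
Proof.
move=> Hm.
have : 0 < #|[set B : {set 'I_G} | #|B| == m]| by rewrite card_draws card_ord bin_gt0.
by case/card_gt0P => x; rewrite inE => /eqP; exists x.
Qed.

Theorem proposition4p6 (n G : nat) (A : {set {set 'I_G}}) (k : nat) :
  0 < n -> 0 < G -> 2 ^ n %| G ->
  A \subset Xfam G (G %/ 2 ^ n) ->
  A != set0 ->
  k.+1 <= norm2 A ->
  ((((G - G %/ 2 ^ n)`! * (G %/ 2 ^ n - k)`!)%:R / (G - k)`!%:R : rat)
     <= #|A|%:R / #|Xfam G (G %/ 2 ^ n)|%:R)%R.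
Proof.
move=> n0 G0 _ AX _ Hk.
set H := G %/ 2 ^ n.
have HG : H < G.
  apply: ltn_Pdiv => //.
  by rewrite -{1}(expn0 2) ltn_exp2l.
have cardA a : a \in A -> #|a| = H.
  by move=> aA; have := subsetP AX a aA; rewrite inE => /eqP.
have kH : k <= H.
  rewrite leqNgt; apply/negP => Hlt.
  have [x Hx] := @exists_card G H.+1 HG.
  have : norm2 A <= #|x|.
    apply: (@norm2_le G A x); apply/forall_inP => a aA; apply/negP => xa.
    by have := subset_leq_card xa; rewrite Hx cardA // ltnn.
  by rewrite Hx => /(leq_trans Hk); rewrite ltnS leqNgt Hlt.
have cover (x : {set 'I_G}) : #|x| = k -> exists2 a, a \in A & x \subset a.
  move=> xk.
  have : ~~ [forall a in A, ~~ (x \subset a)].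
    apply/negP => Hf; have := leq_trans Hk (@norm2_le G A x Hf).
    by rewrite xk ltnn.
  rewrite negb_forall => /existsP[a]; rewrite negb_imply negbK => /andP[aA xa].
  by exists a.
have count : 'C(G, k) <= #|A| * 'C(H, k).
  rewrite -[G in 'C(G, _)]card_ord -card_draws -sum1_card.
  apply: (@leq_trans (\sum_(x in [set B : {set 'I_G} | #|B| == k]) \sum_(a in A) (x \subset a : nat))).
    apply: leq_sum => x; rewrite inE => /eqP /cover [a aA xa].
    by rewrite (bigD1 a) //= xa leq_addr.
  rewrite exchange_big /= -sum_nat_const; apply: leq_sum => a aA.
  rewrite -(cardA a aA) -cards_draws -sum1_card big_mkcond /=.
  rewrite [X in _ <= X]big_mkcond /=.
  apply: leq_sum => x _; rewrite !inE.
  by case: (x \subset a); case: (#|x| == k).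
have cX : #|Xfam G H| = 'C(G, H) by rewrite /Xfam card_draws card_ord.
rewrite cX.
have f0 m : (0 < m`!%:R :> rat)%R by rewrite ltr0n fact_gt0.
have c0 : (0 < 'C(G, H)%:R :> rat)%R by rewrite ltr0n bin_gt0 ltnW.
rewrite ler_pdivrMr // mulrAC ler_pdivlMr // -!natrM ler_nat.
rewrite -(@leq_pmul2r H`!) ?fact_gt0 //.
have bGH := bin_fact (ltnW HG).
have bGk := bin_fact (leq_trans kH (ltnW HG)).
have bHk := bin_fact kH.
have -> : (G - H)`! * (H - k)`! * 'C(G, H) * H`! = 'C(G, k) * (k`! * (G - k)`! * (H - k)`!).
  transitivity ('C(G, H) * (H`! * (G - H)`!) * (H - k)`!); first ring.
  rewrite bGH -bGk; ring.
have -> : #|A| * (G - k)`! * H`! = #|A| * 'C(H, k) * (k`! * (G - k)`! * (H - k)`!).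
  rewrite -bHk; ring.
by rewrite leq_pmul2r ?muln_gt0 ?fact_gt0.
Qed.
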